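(* Let $A,B,C$ be finite sets and let $\omega$ be a probability distribution on $A\times B\times C$ with full support, i.e. $\omega^{ijk}>0$ for all $i\in A$, $j\in B$, $k\in C$. Then there exist a unique 2-comb $f\colon B\to A\otimes C$ in $\mathsf{Stoch}$ and a unique stochastic matrix $g\colon A\to B$ such that $$\omega^{ijk}=f_j^{ik}\,g_i^j\qquad\text{for all } i\in A,\ j\in B,\ k\in C,$$ i.e. $\omega$ equals the composite (in the category of nonnegative real matrices) obtained by copying the $A$-output of $f$, feeding one copy into $g$, copying the output of $g$, and feeding one copy of it back into the input $B$ of $f$, with outputs $A$, $B$, $C$.
   Context: $\mathsf{Stoch}$ is the category whose objects are finite sets and whose morphisms $h\colon X\to Y$ are matrices $(h_x^y)$ of nonnegative reals with $\sum_{y} h_x^y=1$ for each $x$ (row index as superscript, column index as subscript); states $I\to Y$ ($I$ a one-point set) are probability distributions, and a morphism $A_1\otimes A_2\to B_1\otimes B_2$ has entries $h_{a_1a_2}^{b_1b_2}$. A morphism $h$ has full support if it has no zero entries. A 2-comb in $\mathsf{Stoch}$ is a stochastic matrix $h\colon A_1\otimes A_2\to B_1\otimes B_2$ such that there is a stochastic matrix $h'\colon A_1\to B_1$ with $\sum_{b_2} h_{a_1a_2}^{b_1b_2}=h'^{\,b_1}_{a_1}$ for all $a_1,a_2,b_1$ (discarding the output $B_2$ equals $h'$ tensored with discarding $A_2$). Here $f\colon B\to A\otimes C$ is viewed as a 2-comb with $A_1=I$ trivial, $A_2=B$, $B_1=A$, $B_2=C$; thus the condition is that $\sum_{k\in C}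 f_j^{ik}$ is independent of $j\in B$. *)

(* Defs.v *)
From HB Require Import structures.
From mathcomp Require Import all_boot all_order all_algebra.
From mathcomp Require Import reals.
Set Implicit Arguments. Unset Strict Implicit. Unset Printing Implicit Defensive.
Import Order.TTheory GRing.Theory Num.Theory.
Local Open Scope ring_scope.

(* A morphism h : X -> Y of Stoch: a matrix h x y (= h_x^y) of nonnegative
   reals whose rows (indexed by the input x) sum to 1.  Tensor products of
   finite sets are cartesian products; the unit object I is [unit]. *)
Definition is_stoch (R : realType) (X Y : finType)
  (h : {ffun X -> {ffun Y -> R}}) : Prop :=
  (forall x y, 0 <= h x y) /\ (forall x, \sum_(y : Y) h x y = 1).

(* A 2-comb h : A1 (x) A2 -> B1 (x) B2: a stochastic matrix such that
   discarding B2 equals some stochastic h' : A1 -> B1 tensored with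
   discarding A2. *)
Definition is_2comb (R : realType) (A1 A2 B1 B2 : finType)
  (h : {ffun (A1 * A2) -> {ffun (B1 * B2) -> R}}) : Prop :=
  is_stoch h /\
  exists h' : {ffun A1 -> {ffun B1 -> R}},
    is_stoch h' /\
    forall a1 a2 b1, \sum_(b2 : B2) h (a1, a2) (b1, b2) = h' a1 b1.

(* Main.v *)
Require Import Defs.
From HB Require Import structures.
From mathcomp Require Import all_boot all_order all_algebra.
From mathcomp Require Import reals.
From mathcomp Require Import ring lra.
Import Order.TTheory GRing.Theory Num.Theory.
Local Open Scope ring_scope.

Lemma le_sum_one (R : realType) (T : finType) (F : T -> R) x :
  (forall y, 0 <= F y) -> F x <= \sum_y F y.
Proof.
move=> H; rewrite (bigD1 x) //= lerDl; apply: sumr_ge0 => y _; exact: H.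
Qed.

Theorem theorem1 (R : realType) (A B C : finType)
  (omega : {ffun (A * B * C) -> R})
  (homega_pos : forall i j k, 0 < omega (i, j, k))
  (homega_sum : \sum_(x : A * B * C) omega x = 1) :
  exists! fg : {ffun (unit * B) -> {ffun (A * C) -> R}} * {ffun A -> {ffun B -> R}},
    [/\ is_2comb fg.1, is_stoch fg.2 &
        forall i j k, omega (i, j, k) = fg.1 (tt, j) (i, k) * fg.2 i j].
Proof.
have [[[i0 j0] k0] _|H0] := pickP (@predT (A * B * C)%type); last first.
  by move: homega_sum; rewrite big_pred0 // => /eqP; rewrite eq_sym oner_eq0.
pose wm i j := \sum_(k : C) omega (i, j, k).
pose pm i := \sum_(j : B) wm i j.
have wm_gt0 i j : 0 < wm i j.
  apply: (lt_le_trans (homega_pos i j k0)).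
  by apply: (@le_sum_one R C (fun k => omega (i, j, k)) k0) => k; apply/ltW.
have pm_gt0 i : 0 < pm i.
  apply: (lt_le_trans (wm_gt0 i j0)).
  by apply: (@le_sum_one R B (fun j => wm i j) j0) => k; apply/ltW.
have pm_sum : \sum_i pm i = 1.
  rewrite -homega_sum.
  transitivity (\sum_(ab : A * B) \sum_(c : C) omega (ab, c)).
    by rewrite /pm /wm pair_big; apply: eq_big => // -[a b].
  rewrite (pair_big predT predT (fun ab c => omega (ab, c))) /=.
  by apply: eq_bigr => -[[]].
pose g0 : {ffun A -> {ffun B -> R}} := [ffun i => [ffun j => wm i j / pm i]].
pose f0 : {ffun (unit * B) -> {ffun (A * C) -> R}} :=
  [ffun x => [ffun ac => omega (ac.1, x.2, ac.2) * pm ac.1 / wm ac.1 x.2]].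
exists (f0, g0); split.
  split => /=.
  - split.
      split.
        move=> x y; rewrite !ffunE; apply: divr_ge0; last exact/ltW.
        by apply: mulr_ge0; apply/ltW.
      move=> [[] j] /=.
      transitivity (\sum_a \sum_c f0 (tt, j) (a, c)).
        by rewrite pair_big; apply: eq_big => // -[].
      rewrite -pm_sum; apply: eq_bigr => a _.
      under eq_bigr do rewrite !ffunE /=.
      rewrite -mulr_suml -mulr_suml -/(wm a j).
      have := wm_gt0 a j; have := pm_gt0 a; move=> ? ?; field; lra.
    exists [ffun _ => [ffun a => pm a]]; split.
      split; first by move=> x y; rewrite !ffunE; apply/ltW.
      by move=> x; under eq_bigr do rewrite !ffunE.
    move=> [] j a; rewrite !ffunE /=.
    under eq_bigr do rewrite !ffunE /=.
    rewrite -mulr_suml -mulr_suml -/(wm a j).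
    have := wm_gt0 a j; have := pm_gt0 a; move=> ? ?; field; lra.
  - split.
      move=> x y; rewrite !ffunE; apply: divr_ge0; exact/ltW.
    move=> i; under eq_bigr do rewrite !ffunE.
    rewrite -mulr_suml -/(pm i); have := pm_gt0 i; move=> ?; field; lra.
  - move=> i j k; rewrite /= !ffunE /=.
    have := wm_gt0 i j; have := pm_gt0 i; move=> ? ?; field; lra.
move=> [f g] /= [[Hfs [h' [Hh' Hsum]]] [Hg0 Hg1] He].
have Hw i j : wm i j = h' tt i * g i j.
  rewrite /wm; under eq_bigr do rewrite He.
  by rewrite -mulr_suml Hsum.
have Hp i : pm i = h' tt i.
  by rewrite /pm; under eq_bigr do rewrite Hw; rewrite -mulr_sumr Hg1 mulr1.
have Hg : g = g0.
  apply/ffunP => i; apply/ffunP => j; rewrite !ffunE Hw Hp.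
  have := pm_gt0 i; rewrite Hp => ?; field; lra.
have Hf : f = f0.
  apply/ffunP => -[[] j]; apply/ffunP => -[i k]; rewrite !ffunE /=.
  have hg : 0 < g i j by rewrite Hg !ffunE; apply: divr_gt0.
  rewrite He Hw Hp.
  have := pm_gt0 i; rewrite Hp => ?; field; lra.
by rewrite Hf Hg.
Qed.
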